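(* Let $\mu_0<\mu_1$, $\sigma_H>0$, $\pi,\lambda,p\in(0,1)$ fixed, and $s\in(\mu_0,\mu_1)$. Define $A(s)=1-\Phi\big((s-\mu_1)/\sigma_H\big)$, $B(s)=1-\Phi\big((s-\mu_0)/\sigma_H\big)$ (with $\Phi$ the standard normal cdf), \[ \lambda(1,\pi;s)=\frac{\lambda\,[\pi A(s)+(1-\pi)p]}{\pi\,[\lambda A(s)+(1-\lambda)B(s)]+(1-\pi)\,p},\qquad P_S(1,\pi;s)=\lambda(1,\pi;s)^2 . \] Then, holding $(s,\pi,\lambda,p,\mu_0,\mu_1)$ fixed, $\partial_{\sigma_H}\lambda(1,\pi;s)<0$ and $\partial_{\sigma_H}P_S(1,\pi;s)<0$.
   Context: Gaussian–quadratic benchmark: $s\mid(\theta,\omega)\sim\mathcal N(\mu_\omega,\sigma_\theta^2)$; $A$ and $B$ are the probabilities that the High type's signal exceeds the cutoff $s$ in states $\omega=1$ and $\omega=0$; the Low type recommends risk with signal-independent probability $p$; $\lambda(1,\pi;s)$ is the posterior that the state is good after a risky recommendation; effort with cost $c(e)=e^2/2$ is $e^*=\lambda(1,\pi;s)$; $P_S$ is the success probability. *)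

(* Defs.v *)
From Stdlib Require Import Reals.
From Coquelicot Require Import Coquelicot.
Open Scope R_scope.

Definition std_normal_pdf (t : R) : R := / sqrt (2 * PI) * exp (- (t ^ 2) / 2).

Definition Phi (x : R) : R :=
  RInt_gen std_normal_pdf (Rbar_locally m_infty) (at_point x).

Definition Aprob (mu1 sigH s : R) : R := 1 - Phi ((s - mu1) / sigH).
Definition Bprob (mu0 sigH s : R) : R := 1 - Phi ((s - mu0) / sigH).

Definition post_risky (mu0 mu1 pi lam p s sigH : R) : R :=
  lam * (pi * Aprob mu1 sigH s + (1 - pi) * p)
  / (pi * (lam * Aprob mu1 sigH s + (1 - lam) * Bprob mu0 sigH s) + (1 - pi) * p).

Definition succ_prob (mu0 mu1 pi lam p s sigH : R) : R :=
  (post_risky mu0 mu1 pi lam p s sigH) ^ 2.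

(* Main.v *)
Require Import Defs.
From Stdlib Require Import Reals Lra.
From Coquelicot Require Import Coquelicot.
Open Scope R_scope.

Ltac rfix := match goal with |- ?a = ?b => change (@eq R a b) end.

Definition g (t : R) : R := exp (- (t ^ 2) / 2).
Definition h (x t : R) : R := exp (- (x ^ 2) * (1 + t ^ 2) / 2) / (1 + t ^ 2).
Definition dh (x t : R) : R := - x * exp (- (x ^ 2) * (1 + t ^ 2) / 2).

Lemma pos1t t : 0 < 1 + t ^ 2.
Proof. nra. Qed.

Lemma g_cont x : continuous g x.
Proof. apply (@ex_derive_continuous R_AbsRing R_NormedModule). unfold g. auto_derive. auto. Qed.

Lemma g_exRInt a b : ex_RInt g a b.
Proof. apply (@ex_RInt_continuous R_CompleteNormedModule); intros z _. apply g_cont. Qed.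

Lemma h_der x t : is_derive (fun z => h z t) x (dh x t).
Proof.
  unfold h, dh. assert (Ht := pos1t t).
  auto_derive. auto.
  replace (- (x*(x*1)) * (1 + t*(t*1)) * / 2) with (- x ^ 2 * (1 + t ^ 2) / 2) by (simpl; field).
  field. lra.
Qed.

Lemma dh_cont2 x t : continuity_2d_pt (fun u v => Derive (fun z => h z v) u) x t.
Proof.
  apply continuity_2d_pt_ext with (f := dh).
  { intros u v. symmetry. apply is_derive_unique. apply h_der. }
  unfold dh. apply continuity_2d_pt_mult.
  - apply continuity_2d_pt_opp, continuity_2d_pt_id1.
  - apply (continuity_1d_2d_pt_comp exp (fun u v => - u ^ 2 * (1 + v ^ 2) / 2)).
    + apply derivable_continuous_pt, derivable_pt_exp.
    + apply continuity_2d_pt_ext with (f := fun u v => (- (u*u)) * ((1 + v*v) * / 2)).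
      { intros u v. field. }
      apply continuity_2d_pt_mult.
      * apply continuity_2d_pt_opp, continuity_2d_pt_mult; apply continuity_2d_pt_id1.
      * apply continuity_2d_pt_mult; last apply continuity_2d_pt_const.
        apply continuity_2d_pt_plus; first apply continuity_2d_pt_const.
        apply continuity_2d_pt_mult; apply continuity_2d_pt_id2.
Qed.

Definition I (x : R) : R := RInt g 0 x.
Definition H (x : R) : R := RInt (h x) 0 1.
Definition GG (x : R) : R := I x ^ 2 + 2 * H x.

Lemma I_der x : is_derive I x (g x).
Proof.
  apply (is_derive_RInt g I 0 x).
  - apply filter_forall. intros b. apply (RInt_correct g 0 b), g_exRInt.
  - apply g_cont.
Qed.

Lemma h_cont x t : continuous (h x) t.
Proof.
  apply (@ex_derive_continuous R_AbsRing R_NormedModule). unfold h.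
  assert (Ht := pos1t t). auto_derive. lra.
Qed.

Lemma h_exRInt x a b : ex_RInt (h x) a b.
Proof. apply (@ex_RInt_continuous R_CompleteNormedModule); intros z _. apply h_cont. Qed.

Lemma RInt_scalR (f : R -> R) a b c : ex_RInt f a b ->
  RInt (fun t => c * f t) a b = c * RInt f a b.
Proof. intros Hf. apply (RInt_scal f a b c Hf). Qed.

Lemma H_der x : is_derive H x (- g x * I x).
Proof.
  assert (D := is_derive_RInt_param h 0 1 x).
  unfold H.
  replace (- g x * I x) with (RInt (fun t => Derive (fun u => h u t) x) 0 1).
  - apply D.
    + apply filter_forall. intros y t _. eexists. apply h_der.
    + intros t _. apply dh_cont2.
    + apply filter_forall. intros y. apply h_exRInt.
  - rewrite (RInt_ext _ (fun t => - g x * (x * g (x * t + 0)))).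
    + rewrite RInt_scalR.
      * assert (E := RInt_comp_lin g x 0 0 1 (g_exRInt _ _)).
        unfold I. f_equal. etransitivity. apply E. f_equal; ring.
      * apply (@ex_RInt_continuous R_CompleteNormedModule); intros z _.
        apply (@ex_derive_continuous R_AbsRing R_NormedModule).
        unfold g. auto_derive. auto.
    + intros t _. transitivity (dh x t). { apply is_derive_unique. apply h_der. }
      unfold dh, g. replace (x * t + 0) with (x * t) by ring.
      replace (-(x^2)*(1+t^2)/2) with (-(x^2)/2 + -((x*t)^2)/2) by field.
      rewrite exp_plus. rfix. ring.
Qed.

Lemma GG_der x : is_derive GG x 0.
Proof.
  assert (D1 := is_derive_pow I 2 x _ (I_der x)).
  assert (D2 := is_derive_scal H x 2 _ (H_der x)).
  assert (D := is_derive_plus _ _ x _ _ D1 D2).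
  replace 0 with (plus (INR 2 * g x * I x ^ Init.Nat.pred 2) (2 * (- g x * I x))).
  - eapply is_derive_ext; [| apply D]. intros t. reflexivity.
  - simpl. unfold plus; simpl. rfix. ring.
Qed.

Lemma GG_const x : GG x = GG 0.
Proof.
  destruct (MVT_gen GG 0 x (fun _ => 0)) as [c [_ Hc]].
  - intros y _. apply GG_der.
  - intros y _. apply continuity_pt_filterlim.
    apply (@ex_derive_continuous R_AbsRing R_NormedModule). eexists. apply GG_der.
  - lra.
Qed.

Lemma H0 : H 0 = PI / 4.
Proof.
  unfold H. replace (PI / 4) with (atan 1 - atan 0) by (rewrite atan_1, atan_0; ring).
  apply is_RInt_unique.
  apply (is_RInt_ext (fun t => / (1 + t²))).
  - intros t _. unfold h. replace (- 0 ^ 2 * (1 + t ^ 2) / 2) with 0 by (rfix; field).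
    rewrite exp_0. unfold Rsqr. rfix. field. nra.
  - apply (is_RInt_derive atan (fun t => / (1 + t²))).
    + intros y _. apply is_derive_atan.
    + intros y _. apply (@ex_derive_continuous R_AbsRing R_NormedModule).
      unfold Rsqr. auto_derive. nra.
Qed.

Lemma H_ge0 x : 0 <= H x.
Proof.
  apply RInt_ge_0. lra. apply h_exRInt.
  intros t _. unfold h. apply Rlt_le, Rdiv_lt_0_compat. apply exp_pos. apply pos1t.
Qed.

Lemma I_bound x : Rabs (I x) <= sqrt (PI / 2).
Proof.
  assert (E0 : GG 0 = PI / 2).
  { unfold GG. rewrite H0. unfold I. rewrite RInt_point. unfold zero; simpl. field. }
  assert (E := GG_const x). rewrite E0 in E.
  assert (HH := H_ge0 x). unfold GG in E.
  assert (Hs : I x ^ 2 <= PI / 2) by lra.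
  rewrite <- sqrt_Rsqr_abs. apply sqrt_le_1_alt. unfold Rsqr. lra.
Qed.

Definition F0 (x : R) : R := RInt std_normal_pdf 0 x.

Lemma pdf_g t : std_normal_pdf t = / sqrt (2 * PI) * g t.
Proof. reflexivity. Qed.

Lemma sqrt2PI_pos : 0 < sqrt (2 * PI).
Proof. apply sqrt_lt_R0. assert (Hp := PI_RGT_0). lra. Qed.

Lemma pdf_cont x : continuous std_normal_pdf x.
Proof.
  apply (@ex_derive_continuous R_AbsRing R_NormedModule). unfold std_normal_pdf.
  auto_derive. auto.
Qed.

Lemma pdf_exRInt a b : ex_RInt std_normal_pdf a b.
Proof. apply (@ex_RInt_continuous R_CompleteNormedModule); intros z _. apply pdf_cont. Qed.

Lemma pdf_pos t : 0 < std_normal_pdf t.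
Proof. unfold std_normal_pdf. apply Rmult_lt_0_compat. apply Rinv_0_lt_compat, sqrt2PI_pos. apply exp_pos. Qed.

Lemma F0_der x : is_derive F0 x (std_normal_pdf x).
Proof.
  apply (is_derive_RInt std_normal_pdf F0 0 x).
  - apply filter_forall. intros b. apply (RInt_correct std_normal_pdf 0 b), pdf_exRInt.
  - apply pdf_cont.
Qed.

Lemma F0_I x : F0 x = / sqrt (2 * PI) * I x.
Proof. unfold F0, I. rewrite <- RInt_scalR by apply g_exRInt. reflexivity. Qed.

Lemma sqrt2PI_eq : sqrt (2 * PI) = 2 * sqrt (PI / 2).
Proof.
  replace (2 * PI) with (2 * 2 * (PI / 2)) by field.
  assert (Hp := PI_RGT_0).
  rewrite sqrt_mult_alt by lra. rewrite sqrt_square by lra. reflexivity.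
Qed.

Lemma F0_bound x : Rabs (F0 x) <= / 2.
Proof.
  rewrite F0_I, Rabs_mult, Rabs_inv, (Rabs_pos_eq (sqrt _)) by (apply sqrt_pos).
  rewrite sqrt2PI_eq.
  assert (Hs : 0 < sqrt (PI / 2)). { apply sqrt_lt_R0. assert (Hp := PI_RGT_0). lra. }
  assert (Hb := I_bound x).
  apply (Rmult_le_reg_l (2 * sqrt (PI / 2))). lra.
  rewrite <- Rmult_assoc, Rinv_r by lra. lra.
Qed.

Lemma pdf_le_exp t : t <= -2 -> std_normal_pdf t <= exp t.
Proof.
  intros Ht. unfold std_normal_pdf.
  assert (Hs : 1 <= sqrt (2 * PI)).
  { rewrite <- sqrt_1. apply sqrt_le_1_alt. assert (Hp := PI2_1). lra. }
  assert (He : exp (- t ^ 2 / 2) <= exp t). { destruct (Rle_lt_or_eq_dec (- t ^ 2 / 2) t) as [Hl|Hl]; [nra | apply Rlt_le, exp_increasing; exact Hl | rewrite Hl; lra]. }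
  assert (Hi : 0 < / sqrt (2 * PI) <= 1).
  { split. apply Rinv_0_lt_compat; lra. rewrite <- Rinv_1. apply Rinv_le_contravar; lra. }
  assert (0 < exp (- t ^ 2 / 2)) by apply exp_pos. nra.
Qed.

Lemma RInt_pdf_small u v : u <= v -> v <= -2 -> 0 <= RInt std_normal_pdf u v <= exp v.
Proof.
  intros Huv Hv. split.
  - apply RInt_ge_0; auto. apply pdf_exRInt. intros; apply Rlt_le, pdf_pos.
  - apply Rle_trans with (RInt exp u v).
    + apply RInt_le; auto. apply pdf_exRInt.
      apply (@ex_RInt_continuous R_CompleteNormedModule); intros z _.
      apply (@ex_derive_continuous R_AbsRing R_NormedModule). auto_derive. auto.
      intros x Hx. apply pdf_le_exp. lra.
    + rewrite (is_RInt_unique exp u v (exp v - exp u)).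
      * assert (0 < exp u) by apply exp_pos. lra.
      * apply (is_RInt_derive exp exp).
        -- intros x _. apply is_derive_exp.
        -- intros x _. apply (@ex_derive_continuous R_AbsRing R_NormedModule). auto_derive. auto.
Qed.

Lemma F0_diff u v : F0 v - F0 u = RInt std_normal_pdf u v.
Proof.
  unfold F0. rewrite <- (RInt_Chasles std_normal_pdf 0 u v) by apply pdf_exRInt.
  unfold plus; simpl. ring.
Qed.

Lemma F0_cauchy : exists L : R, filterlim F0 (Rbar_locally m_infty) (locally L).
Proof.
  apply (@Hierarchy.filterlim_locally_cauchy R R_CompleteSpace (Rbar_locally m_infty) (Rbar_locally_filter m_infty)).
  intros eps.
  exists (fun x => x < Rmin (-2) (ln eps)). split.
  - exists (Rmin (-2) (ln eps)). auto.
  - intros u v Hu Hv.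
    assert (Hm1 := Rmin_l (-2) (ln eps)). assert (Hm2 := Rmin_r (-2) (ln eps)).
    assert (He : exp (ln eps) = eps) by (apply exp_ln; apply cond_pos).
    change (Rabs (F0 v - F0 u) < eps).
    rewrite F0_diff.
    destruct (Rle_dec u v) as [Huv|Huv].
    + destruct (RInt_pdf_small u v Huv ltac:(lra)) as [A1 A2].
      rewrite Rabs_pos_eq by lra.
      assert (exp v < exp (ln eps)) by (apply exp_increasing; lra). lra.
    + rewrite <- opp_RInt_swap by apply pdf_exRInt.
      destruct (RInt_pdf_small v u ltac:(lra) ltac:(lra)) as [A1 A2].
      unfold opp; simpl. rewrite Rabs_Ropp, Rabs_pos_eq by lra.
      assert (exp u < exp (ln eps)) by (apply exp_increasing; lra). lra.
Qed.

Lemma Phi_F0 : exists L, filterlim F0 (Rbar_locally m_infty) (locally L) /\ forall x, Phi x = F0 x - L.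
Proof.
  destruct F0_cauchy as [L HL]. exists L. split; [exact HL|]. intros x.
  unfold Phi.
  apply is_RInt_gen_unique.
  apply (@is_RInt_gen_ext R_NormedModule _ _ _ _ (Derive F0)).
  - apply filter_forall. intros ab t _. apply is_derive_unique, F0_der.
  - apply (@is_RInt_gen_Derive _ _ _ _).
    + apply filter_forall. intros ab t _. eexists. apply F0_der.
    + apply filter_forall. intros ab t _.
      apply (continuous_ext std_normal_pdf).
      * intros y. symmetry. apply is_derive_unique, F0_der.
      * apply pdf_cont.
    + exact HL.
    + intros P HP. unfold filtermap, at_point. apply (locally_singleton (F0 x) P HP).
Qed.

Lemma Phi_der_le1 : (forall x, is_derive Phi x (std_normal_pdf x)) /\ (forall x, Phi x <= 1).
Proof.
  destruct Phi_F0 as [L [HL HPhi]]. split.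
  - intros x. apply (is_derive_ext (fun y => F0 y - L)).
    + intros y. symmetry. apply HPhi.
    + assert (D := is_derive_minus F0 (fun _ => L) x _ _ (F0_der x) (is_derive_const L x)).
      replace (std_normal_pdf x) with (minus (std_normal_pdf x) 0) by (unfold minus, plus, opp, zero; simpl; ring).
      exact D.
  - intros x. rewrite HPhi.
    assert (HLb : - / 2 <= L).
    { destruct (Rle_dec (- / 2) L) as [Hle|Hlt]; [exact Hle|].
      exfalso.
      assert (Heps : 0 < - / 2 - L) by lra.
      destruct (HL (ball L (mkposreal _ Heps)) (locally_ball L (mkposreal _ Heps))) as [M HM].
      assert (Hy := HM (M - 1) ltac:(lra)).
      change (Rabs (F0 (M - 1) - L) < - / 2 - L) in Hy.
      assert (Hb := F0_bound (M - 1)).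
      apply Rabs_lt_between in Hy. apply Rabs_le_between in Hb. lra. }
    assert (Hb := F0_bound x). apply Rabs_le_between in Hb. lra.
Qed.

Lemma der_cdiv c x : x <> 0 -> is_derive (fun sg => c / sg) x (- c / x ^ 2).
Proof. intros Hx. auto_derive. exact Hx. rfix. field. exact Hx. Qed.

Lemma der_one_minus_Phi c x : x <> 0 ->
  is_derive (fun sg => 1 - Phi (c / sg)) x (- (std_normal_pdf (c / x) * (- c / x ^ 2))).
Proof.
  intros Hx. destruct Phi_der_le1 as [HD _].
  assert (D := is_derive_minus (fun _ => 1) (fun sg => Phi (c / sg)) x _ _
     (is_derive_const 1 x) (is_derive_comp Phi (fun sg => c / sg) x _ _ (HD (c / x)) (der_cdiv c x Hx))).
  eapply is_derive_ext; [| replace (- (std_normal_pdf (c / x) * (- c / x ^ 2))) with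
      (minus 0 (scal (- c / x ^ 2) (std_normal_pdf (c / x)))); [exact D|] ].
  - intros t. reflexivity.
  - unfold minus, plus, opp, zero, scal; simpl. unfold mult; simpl. rfix. ring.
Qed.

Theorem lemmaD5 (mu0 mu1 sigH pi lam p s : R) :
  mu0 < mu1 -> 0 < sigH ->
  0 < pi < 1 -> 0 < lam < 1 -> 0 < p < 1 ->
  mu0 < s < mu1 ->
  (exists d, is_derive (fun sg => post_risky mu0 mu1 pi lam p s sg) sigH d /\ d < 0) /\
  (exists d, is_derive (fun sg => succ_prob mu0 mu1 pi lam p s sg) sigH d /\ d < 0).
Proof.
  intros Hmu Hsg Hpi Hlam Hp Hs.
  assert (Hx : sigH <> 0) by lra.
  destruct Phi_der_le1 as [_ Hle].
  set (A := Aprob mu1 sigH s). set (B := Bprob mu0 sigH s).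
  set (pa := std_normal_pdf ((s - mu1) / sigH)).
  set (pb := std_normal_pdf ((s - mu0) / sigH)).
  set (dA := - (pa * (- (s - mu1) / sigH ^ 2))).
  set (dB := - (pb * (- (s - mu0) / sigH ^ 2))).
  assert (HA : is_derive (fun sg => Aprob mu1 sg s) sigH dA) by (apply der_one_minus_Phi; exact Hx).
  assert (HB : is_derive (fun sg => Bprob mu0 sg s) sigH dB) by (apply der_one_minus_Phi; exact Hx).
  assert (A0 : 0 <= A) by (unfold A, Aprob; specialize (Hle ((s - mu1) / sigH)); lra).
  assert (B0 : 0 <= B) by (unfold B, Bprob; specialize (Hle ((s - mu0) / sigH)); lra).
  assert (Hs2 : 0 < sigH ^ 2) by nra.
  assert (dAneg : dA < 0).
  { unfold dA. assert (0 < pa) by apply pdf_pos.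
    assert (0 < (mu1 - s) / sigH ^ 2) by (apply Rdiv_lt_0_compat; lra).
    replace (- (pa * (- (s - mu1) / sigH ^ 2))) with (- (pa * ((mu1 - s) / sigH ^ 2))) by (field; lra).
    nra. }
  assert (dBpos : 0 < dB).
  { unfold dB. assert (0 < pb) by apply pdf_pos.
    assert (0 < (s - mu0) / sigH ^ 2) by (apply Rdiv_lt_0_compat; lra).
    replace (- (pb * (- (s - mu0) / sigH ^ 2))) with (pb * ((s - mu0) / sigH ^ 2)) by (field; lra).
    nra. }
  set (N := pi * A + (1 - pi) * p). set (M := pi * B + (1 - pi) * p).
  assert (N0 : 0 < N) by (unfold N; nra).
  assert (M0 : 0 < M) by (unfold M; nra).
  set (Num := lam * (pi * A + (1 - pi) * p)).
  set (Den := pi * (lam * A + (1 - lam) * B) + (1 - pi) * p).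
  assert (Den0 : 0 < Den).
  { replace Den with (lam * N + (1 - lam) * M) by (unfold Den, N, M; ring). nra. }
  assert (HNum : is_derive (fun sg => lam * (pi * Aprob mu1 sg s + (1 - pi) * p)) sigH (lam * (pi * dA))).
  { apply is_derive_scal.
    assert (D := is_derive_plus _ _ sigH _ _ (is_derive_scal _ sigH pi _ HA) (is_derive_const ((1 - pi) * p) sigH)).
    eapply is_derive_ext; [| replace (pi * dA) with (plus (pi * dA) zero); [exact D|]].
    - intros t; reflexivity.
    - unfold plus, zero; simpl. rfix. ring. }
  assert (HDen : is_derive (fun sg => pi * (lam * Aprob mu1 sg s + (1 - lam) * Bprob mu0 sg s) + (1 - pi) * p)
                   sigH (pi * (lam * dA + (1 - lam) * dB))).
  { assert (D1 := is_derive_plus _ _ sigH _ _ (is_derive_scal _ sigH lam _ HA) (is_derive_scal _ sigH (1 - lam) _ HB)).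
    assert (D2 := is_derive_scal _ sigH pi _ D1).
    assert (D := is_derive_plus _ _ sigH _ _ D2 (is_derive_const ((1 - pi) * p) sigH)).
    eapply is_derive_ext; [| replace (pi * (lam * dA + (1 - lam) * dB)) with (plus (pi * plus (lam * dA) ((1 - lam) * dB)) zero); [exact D|]].
    - intros t; reflexivity.
    - unfold plus, zero; simpl. rfix. ring. }
  set (d := (lam * (pi * dA) * Den - Num * (pi * (lam * dA + (1 - lam) * dB))) / Den ^ 2).
  assert (Hpost : is_derive (fun sg => post_risky mu0 mu1 pi lam p s sg) sigH d).
  { assert (D := is_derive_div _ _ sigH _ _ HNum HDen ltac:(cbv beta; fold A B Den; lra)).
    eapply is_derive_ext; [| exact D]. intros t; reflexivity. }
  assert (dneg : d < 0).
  { unfold d.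
    replace (lam * (pi * dA) * Den - Num * (pi * (lam * dA + (1 - lam) * dB)))
      with (lam * pi * (1 - lam) * (dA * M - N * dB)) by (unfold Den, Num, N, M; ring).
    assert (0 < lam * pi * (1 - lam)) by (apply Rmult_lt_0_compat; [apply Rmult_lt_0_compat|]; lra).
    assert (Q1 : 0 < (- dA) * M) by (apply Rmult_lt_0_compat; lra).
    assert (Q2 : 0 < N * dB) by (apply Rmult_lt_0_compat; lra).
    assert (dA * M - N * dB < 0) by lra.
    apply Rdiv_neg_pos. nra. apply pow_lt; lra. }
  split.
  - exists d. split; assumption.
  - set (P := post_risky mu0 mu1 pi lam p s sigH).
    assert (P0 : 0 < P).
    { unfold P, post_risky. fold A B. apply Rdiv_lt_0_compat; [|fold Den; lra].
      apply Rmult_lt_0_compat; [lra|]. fold N; lra. }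
    exists (INR 2 * d * P ^ Init.Nat.pred 2). split.
    + apply (is_derive_pow (fun sg => post_risky mu0 mu1 pi lam p s sg) 2 sigH d Hpost).
    + simpl. nra.
Qed.
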